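(* Let $\alpha,\beta,\lambda,\varepsilon_1,\varepsilon_2$ be positive real numbers and consider the planar system $$s'=s\big(\varepsilon_2-\beta-\varepsilon_2 s+(\varepsilon_1-\varepsilon_2-\lambda)i\big),\qquad i'=i\big(\varepsilon_2-\varepsilon_1-\alpha+(\lambda-\varepsilon_2)s+(\varepsilon_1-\varepsilon_2)i\big)$$ on $D_1=\{(s,i): s\ge0,\ i\ge0,\ s+i\le1\}$, with interior $\overset{o}{D}_1$. Define $$T_0=\varepsilon_2-\beta,\quad T_1=\varepsilon_2-\varepsilon_1-\alpha,\quad T_2=\varepsilon_2-\beta+\frac{(\varepsilon_1-\varepsilon_2-\lambda)(\varepsilon_2-\varepsilon_1-\alpha)}{\varepsilon_2-\varepsilon_1},\quad T_3=\varepsilon_2-\varepsilon_1-\alpha-\frac{(\varepsilon_2-\lambda)(\varepsilon_2-\beta)}{\varepsilon_2}.$$ If $T_0>0$, $T_1>0$, $T_2<0$ and $T_3<0$, then the system has a saddle point in $\overset{o}{D}_1$.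
   Context: Note $T_1>0$ implies $\varepsilon_2\neq\varepsilon_1$, so $T_2$ is defined. A saddle point is a rest point at which some eigenvalues of the linearization have positive real parts and the others negative real parts. This is the special case $b=\beta_1=\gamma=0$ (with $\beta=\beta_2$) of the SIRS proportions system reduced to the $(s,i)$-plane. *)

(* Defs.v *)
From Stdlib Require Import Reals Lra.
From Coquelicot Require Import Coquelicot.
Open Scope R_scope.

Definition vf_s (alpha beta lambda eps1 eps2 : R) (s i : R) : R :=
  s * (eps2 - beta - eps2 * s + (eps1 - eps2 - lambda) * i).
Definition vf_i (alpha beta lambda eps1 eps2 : R) (s i : R) : R :=
  i * (eps2 - eps1 - alpha + (lambda - eps2) * s + (eps1 - eps2) * i).

Definition interior_D1 (s i : R) : Prop := 0 < s /\ 0 < i /\ s + i < 1.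

Definition rest_point (F G : R -> R -> R) (s i : R) : Prop :=
  F s i = 0 /\ G s i = 0.

Definition jac11 (F : R -> R -> R) (s i : R) : R := Derive (fun x => F x i) s.
Definition jac12 (F : R -> R -> R) (s i : R) : R := Derive (fun y => F s y) i.

Definition lin_eigenvalue (F G : R -> R -> R) (s i : R) (z : C) : Prop :=
  ((RtoC (jac11 F s i) - z) * (RtoC (jac12 G s i) - z)
   - RtoC (jac12 F s i) * RtoC (jac11 G s i))%C = RtoC 0.

Definition saddle_point (F G : R -> R -> R) (s i : R) : Prop :=
  rest_point F G s i /\
  (exists z, lin_eigenvalue F G s i z /\ 0 < Re z) /\
  (exists z, lin_eigenvalue F G s i z /\ Re z < 0) /\
  (forall z, lin_eigenvalue F G s i z -> Re z <> 0).

(* Main.v *)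
Require Import Defs.
From Stdlib Require Import Reals.
From Coquelicot Require Import Coquelicot.
From Stdlib Require Import Lra Psatz.
Open Scope R_scope.

Lemma j11F al b l e1 a s i : jac11 (vf_s al b l e1 a) s i = a - b - 2*a*s + (e1-a-l)*i.
Proof. unfold jac11, vf_s. apply is_derive_unique. auto_derive; auto. ring. Qed.
Lemma j12F al b l e1 a s i : jac12 (vf_s al b l e1 a) s i = (e1-a-l)*s.
Proof. unfold jac12, vf_s. apply is_derive_unique. auto_derive; auto. ring. Qed.
Lemma j11G al b l e1 a s i : jac11 (vf_i al b l e1 a) s i = (l-a)*i.
Proof. unfold jac11, vf_i. apply is_derive_unique. auto_derive; auto. ring. Qed.
Lemma j12G al b l e1 a s i : jac12 (vf_i al b l e1 a) s i = a - e1 - al + (l-a)*s + 2*(e1-a)*i.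
Proof. unfold jac12, vf_i. apply is_derive_unique. auto_derive; auto. ring. Qed.

Lemma eig_real (F G : R -> R -> R) s i x :
  (jac11 F s i - x) * (jac12 G s i - x) - jac12 F s i * jac11 G s i = 0 ->
  lin_eigenvalue F G s i (RtoC x).
Proof.
  intros H. unfold lin_eigenvalue, RtoC.
  apply injective_projections; simpl; [lra|ring].
Qed.

Lemma eig_re (F G : R -> R -> R) s i z :
  jac11 F s i * jac12 G s i - jac12 F s i * jac11 G s i < 0 ->
  lin_eigenvalue F G s i z -> Re z <> 0.
Proof.
  intros Hd H. destruct z as [x y]. unfold lin_eigenvalue, RtoC in H.
  apply (f_equal fst) in H. simpl in H. unfold Re; simpl. intro Hx. subst x.
  nra.
Qed.

Lemma saddle_of (F G : R -> R -> R) s i :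
  rest_point F G s i ->
  jac11 F s i * jac12 G s i - jac12 F s i * jac11 G s i < 0 ->
  saddle_point F G s i.
Proof.
  intros Hr Hd. set (p := jac11 F s i) in *. set (q := jac12 G s i) in *.
  set (u := jac12 F s i * jac11 G s i) in *.
  set (disc := (p+q)^2 - 4*(p*q-u)).
  assert (Hdisc : 0 < disc) by (unfold disc; assert (0 <= (p+q)^2) by (apply pow2_ge_0); lra).
  assert (Hsq : sqrt disc * sqrt disc = disc) by (apply sqrt_sqrt; lra).
  assert (Hs0 : 0 < sqrt disc) by (apply sqrt_lt_R0; lra).
  assert (Ha : p+q < sqrt disc) by (unfold disc in *; nra).
  assert (Hb : -(p+q) < sqrt disc) by (unfold disc in *; nra).
  split; [exact Hr|split; [|split]].
  - exists (RtoC ((p+q+sqrt disc)/2)). split.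
    + apply eig_real. fold p q u. match goal with |- ?e = 0 => replace e with ((sqrt disc * sqrt disc - disc)/4) by (unfold disc; field) end. rewrite Hsq. field.
    + unfold Re, RtoC; simpl. lra.
  - exists (RtoC ((p+q-sqrt disc)/2)). split.
    + apply eig_real. fold p q u. match goal with |- ?e = 0 => replace e with ((sqrt disc * sqrt disc - disc)/4) by (unfold disc; field) end. rewrite Hsq. field.
    + unfold Re, RtoC; simpl. lra.
  - intros z. apply eig_re. exact Hd.
Qed.

Lemma main_aux (al b l e1 a : R) :
  0 < al -> 0 < b -> 0 < l -> 0 < e1 -> 0 < a ->
  0 < a - b -> 0 < a - e1 - al ->
  (a - b) * (a - e1) + (e1 - a - l) * (a - e1 - al) < 0 ->
  a * (a - e1 - al) + (l - a) * (a - b) < 0 ->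
  exists s i : R,
    interior_D1 s i /\
    saddle_point (vf_s al b l e1 a) (vf_i al b l e1 a) s i.
Proof.
  intros Hal Hb Hl He1 Ha H0 H1 HNs HNi.
  assert (Hd : 0 < a - e1) by lra.
  assert (HD : - a * (e1 - a) - (e1 - a - l) * (l - a) < 0).
  { assert (P1 : 0 < (a - b) * (a - e1)) by nra. assert (P2 : 0 < a * (a - e1 - al)) by nra.
    assert (Q1 : (a - b) * (a - e1) < (a - e1 + l) * (a - e1 - al)) by nra.
    assert (Q2 : a * (a - e1 - al) < (a - l) * (a - b)) by nra.
    assert (Q : ((a - b) * (a - e1)) * (a * (a - e1 - al)) < ((a - e1 + l) * (a - e1 - al)) * ((a - l) * (a - b))).
    { apply Rlt_trans with (((a - e1 + l) * (a - e1 - al)) * (a * (a - e1 - al))).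
      - apply Rmult_lt_compat_r; lra.
      - apply Rmult_lt_compat_l; nra. }
    assert (Q' : (a - b) * (a - e1 - al) * (a * (a - e1) - (a - e1 + l) * (a - l)) < 0) by nra.
    assert (E : - a * (e1 - a) - (e1 - a - l) * (l - a) = a * (a - e1) - (a - e1 + l) * (a - l)) by ring.
    rewrite E. nra. }
  assert (Hr : 0 < b + l - e1 - al).
  { assert (E : (a - b) * (a - e1) + (e1 - a - l) * (a - e1 - al)
               = (a - e1) * (e1 + al - b - l) + l * al) by ring.
    assert ((a - e1) * (e1 + al - b - l) < 0) by nra. nra. }
  remember ((a - b) * (a - e1) + (e1 - a - l) * (a - e1 - al)) as Ns eqn:ENs.
  remember (a * (a - e1 - al) + (l - a) * (a - b)) as Ni eqn:ENi.
  remember (- a * (e1 - a) - (e1 - a - l) * (l - a)) as D eqn:ED.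
  exists (Ns / D), (Ni / D).
  assert (Hs : 0 < Ns / D).
  { replace (Ns / D) with ((- Ns) / (- D)) by (field; lra). apply Rdiv_lt_0_compat; lra. }
  assert (Hi : 0 < Ni / D).
  { replace (Ni / D) with ((- Ni) / (- D)) by (field; lra). apply Rdiv_lt_0_compat; lra. }
  assert (HD0 : D <> 0) by lra.
  assert (E1 : a - b - a * (Ns / D) + (e1 - a - l) * (Ni / D) = 0).
  { rewrite ENs, ENi. field_simplify; [|subst D; lra]. rewrite ED. field. subst D; lra. }
  assert (E2 : a - e1 - al + (l - a) * (Ns / D) + (e1 - a) * (Ni / D) = 0).
  { rewrite ENs, ENi. field_simplify; [|subst D; lra]. rewrite ED. field. subst D; lra. }
  split.
  - unfold interior_D1. split; [exact Hs|split; [exact Hi|]].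
    assert (E : 1 - Ns / D - Ni / D = (b + l - e1 - al) / l).
    { rewrite ENs, ENi. field_simplify; [|subst D; lra|lra]. rewrite ED. field. subst D; lra. }
    assert (0 < (b + l - e1 - al) / l) by (apply Rdiv_lt_0_compat; lra). lra.
  - apply saddle_of.
    + unfold rest_point, vf_s, vf_i. rewrite E1, E2. split; ring.
    + rewrite j11F, j12F, j11G, j12G.
      set (s := Ns / D) in *. set (i := Ni / D) in *.
      replace (a - b - 2 * a * s + (e1 - a - l) * i) with (- a * s) by lra.
      replace (a - e1 - al + (l - a) * s + 2 * (e1 - a) * i) with ((e1 - a) * i) by lra.
      replace (- a * s * ((e1 - a) * i) - (e1 - a - l) * s * ((l - a) * i)) with (s * i * D) by (rewrite ED; ring).
      assert (0 < s * i) by nra. nra.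
Qed.

Theorem proposition3p2 (alpha beta lambda eps1 eps2 : R) :
  0 < alpha -> 0 < beta -> 0 < lambda -> 0 < eps1 -> 0 < eps2 ->
  let T0 := eps2 - beta in
  let T1 := eps2 - eps1 - alpha in
  let T2 := eps2 - beta
            + (eps1 - eps2 - lambda) * (eps2 - eps1 - alpha) / (eps2 - eps1) in
  let T3 := eps2 - eps1 - alpha - (eps2 - lambda) * (eps2 - beta) / eps2 in
  T0 > 0 -> T1 > 0 -> T2 < 0 -> T3 < 0 ->
  exists s i : R,
    interior_D1 s i /\
    saddle_point (vf_s alpha beta lambda eps1 eps2)
                 (vf_i alpha beta lambda eps1 eps2) s i.
Proof.
  intros Hal Hb Hl He1 Ha T0 T1 T2 T3 H0 H1 H2 H3.
  unfold T0, T1, T2, T3 in *. clear T0 T1 T2 T3.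
  apply main_aux; try lra.
  - assert (Hd : 0 < eps2 - eps1) by lra.
    assert (E : (eps2 - beta) * (eps2 - eps1) + (eps1 - eps2 - lambda) * (eps2 - eps1 - alpha)
      = (eps2 - beta + (eps1 - eps2 - lambda) * (eps2 - eps1 - alpha) / (eps2 - eps1)) * (eps2 - eps1))
      by (field; lra).
    rewrite E. nra.
  - assert (E : eps2 * (eps2 - eps1 - alpha) + (lambda - eps2) * (eps2 - beta)
      = (eps2 - eps1 - alpha - (eps2 - lambda) * (eps2 - beta) / eps2) * eps2)
      by (field; lra).
    rewrite E. nra.
Qed.
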